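(* Let $p$ be an odd prime, $m\ge 2$ an integer, $q=p^m$. Consider the map $\tau$ sending a pair of integers $(q_1,q_2)$ with $q_1,q_2,q_1+q_2,q_1-q_2$ all $\not\equiv 0\pmod q$ to the $m$-tuple of polynomials \[\tau(q_1,q_2)=\big(\psi(q_1,q_2),\ \alpha^{(1)}(q_1,q_2),\dots,\alpha^{(m-1)}(q_1,q_2)\big).\] Then $\tau$ takes at most $m^2$ distinct values.
   Context: Let $\gamma=e^{2\pi i/q}$. Let $A$ be the set of residues mod $q$ (in $\{1,\dots,q-1\}$) coprime to $q$, and for $1\le j\le m-1$ let $B_j=\{x\in\{1,\dots,q-1\}: p^j\mid x,\ p^{j+1}\nmid x\}$. For a pair $(q_1,q_2)$ define $\psi(q_1,q_2)(z)=\sum_{l\in A}\prod_{i=1}^{2}(z-\gamma^{q_il})(z-\gamma^{-q_il})$ and $\alpha^{(j)}(q_1,q_2)(z)=\sum_{l\in B_j}\prod_{i=1}^{2}(z-\gamma^{q_il})(z-\gamma^{-q_il})$, polynomials in $\mathbf{Q}(\gamma)[z]$. *)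

(* Defs.v *)
From HB Require Import structures.
From mathcomp Require Import all_boot all_order all_algebra all_field.
Set Implicit Arguments. Unset Strict Implicit. Unset Printing Implicit Defensive.
Import Order.TTheory GRing.Theory Num.Theory.
Local Open Scope ring_scope.

(* gamma is characterised inside algC as e^{2 pi i/q}: a primitive q-th root of
   unity with positive imaginary part and maximal real part among the q-th roots
   of unity different from 1. *)
Definition is_exp_2pii_over (q : nat) (g : algC) : Prop :=
  [/\ q.-primitive_root g, 0 < 'Im g &
      forall z : algC, q.-unity_root z -> z != 1 -> 'Re z <= 'Re g].

Definition factor_poly (g : algC) (q1 q2 : int) (l : nat) : {poly algC} :=
  ('X - (g ^ (q1 * l%:Z))%:P) * ('X - (g ^ (- (q1 * l%:Z)))%:P) *
  (('X - (g ^ (q2 * l%:Z))%:P) * ('X - (g ^ (- (q2 * l%:Z)))%:P)).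

Definition psi_poly (q : nat) (g : algC) (q1 q2 : int) : {poly algC} :=
  \sum_(1 <= l < q | coprime l q) factor_poly g q1 q2 l.

Definition alpha_poly (p q j : nat) (g : algC) (q1 q2 : int) : {poly algC} :=
  \sum_(1 <= l < q | (p ^ j %| l)%N && ~~ (p ^ j.+1 %| l)%N) factor_poly g q1 q2 l.

Definition tau (p m : nat) (g : algC) (q1 q2 : int) : seq {poly algC} :=
  psi_poly (p ^ m) g q1 q2 ::
  [seq alpha_poly p (p ^ m) j g q1 q2 | j <- iota 1 m.-1].

(* Main.v *)
Require Import Defs.
From HB Require Import structures.
From mathcomp Require Import all_boot all_order all_algebra all_field.
From mathcomp Require Import cyclic.
From Stdlib Require Import ClassicalEpsilon.
Import Order.TTheory GRing.Theory Num.Theory.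
Local Open Scope ring_scope.
Definition cz (g : algC) (z : int) : algC := g ^ z + g ^ (- z).
Lemma lin_fac (x y : algC) : x * y = 1 ->
  ('X - x%:P) * ('X - y%:P) = ('X^2 + 1) - (x + y)%:P * 'X.
Proof.
move=> xy.
rewrite mulrBl !mulrBr -expr2 polyCD mulrDl -polyCM xy.
rewrite polyC1 [_ * y%:P]mulrC opprB addrA [in RHS]opprD [in RHS]addrA [in RHS]addrAC.
congr (_ - _); exact: addrAC.
Qed.

Lemma czM (g : algC) a b : g != 0 -> cz g a * cz g b = cz g (a + b) + cz g (a - b).
Proof.
move=> g0; rewrite /cz mulrDl !mulrDr -!expfzDr //.
rewrite opprD opprB (addrC b).
by rewrite [g ^ (- a + b) + _]addrC addrACA.
Qed.

Lemma quad_id (R : comPzRingType) (U X A B : R) :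
  (U - A * X) * (U - B * X) = U ^+ 2 - (A + B) * (X * U) + A * B * X ^+ 2.
Proof.
rewrite mulrBl !mulrBr opprB -expr2 addrA mulrDl opprD addrA.
rewrite [LHS]addrAC [in LHS](addrAC (U ^+ 2)).
congr (_ - _ - _ + _).
- by rewrite mulrA.
- by rewrite mulrC mulrA.
- by rewrite expr2 mulrACA.
Qed.

Lemma factor_eq g q1 q2 l : g != 0 -> factor_poly g q1 q2 l =
  ('X^2+1)^+2 - (cz g (q1 * l%:Z) + cz g (q2 * l%:Z))%:P * ('X * ('X^2+1))
  + (cz g ((q1+q2) * l%:Z) + cz g ((q1-q2) * l%:Z))%:P * 'X^2.
Proof.
move=> g0; rewrite /factor_poly !lin_fac; last 2 first.
- by rewrite -expfzDr // subrr expr0z.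
- by rewrite -expfzDr // subrr expr0z.
have -> : cz g ((q1+q2) * l%:Z) + cz g ((q1-q2) * l%:Z) = cz g (q1 * l%:Z) * cz g (q2 * l%:Z)
  by rewrite czM // mulrDl mulrBl.
rewrite -/(cz g (q1 * l%:Z)) -/(cz g (q2 * l%:Z)).
by rewrite (@quad_id {poly algC}) -polyCD -polyCM.
Qed.

Definition FS (g : algC) (q : nat) (S : pred nat) (n : int) : algC :=
  \sum_(1 <= l < q | S l) cz g (n * l%:Z).

Lemma sum_factor g q (S : pred nat) q1 q2 : g != 0 ->
  \sum_(1 <= l < q | S l) factor_poly g q1 q2 l =
  \sum_(1 <= l < q | S l) ('X^2+1)^+2
  - (FS g q S q1 + FS g q S q2)%:P * ('X * ('X^2+1))
  + (FS g q S (q1+q2) + FS g q S (q1-q2))%:P * 'X^2.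
Proof.
move=> g0; rewrite (eq_bigr _ (fun l _ => factor_eq g q1 q2 l g0)).
rewrite big_split sumrB /= -!mulr_suml -!rmorph_sum.
by rewrite /FS -!big_split.
Qed.

Lemma cz_N g z : cz g (- z) = cz g z.
Proof. by rewrite /cz opprK addrC. Qed.

Lemma cz_abs g (n : int) (l : nat) : cz g (n * l%:Z) = cz g (Posz (`|n| * l)%N).
Proof.
case: n => a /=; first by rewrite PoszM.
by rewrite NegzE mulNr cz_N PoszM.
Qed.

Lemma cz_mod g q k : q.-primitive_root g -> cz g (Posz (k %% q)) = cz g (Posz k).
Proof.
move=> pg; rewrite /cz -!invr_expz.
have E : forall j, g ^ (Posz j) = g ^+ j by [].
by rewrite !E (prim_expr_mod pg).
Qed.

Lemma FS_ord g q (S : pred nat) a : ~~ S 0%N -> (0 < q)%N ->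
  FS g q S (Posz a) = \sum_(i < q | S i) cz g (Posz (a * i)%N).
Proof.
move=> S0 q0; rewrite /FS -(big_mkord (fun i => S i) (fun i => cz g (Posz (a * i)%N))) (big_ltn_cond q0) (negbTE S0).
by apply: eq_bigr => l _; rewrite PoszM.
Qed.

Lemma mul_inj q u (l1 l2 : nat) : coprime u q -> (l1 < q)%N -> (l2 < q)%N ->
  ((u * l1) %% q = (u * l2) %% q)%N -> l1 = l2.
Proof.
move=> cu.
wlog le : l1 l2 / (l2 <= l1)%N.
  move=> H h1 h2 e; case: (leqP l2 l1) => [l|l]; first exact: H.
  by apply/esym/H => //; apply: ltnW.
move=> h1 h2 e.
have : (u * l1 == u * l2 %[mod q])%N by apply/eqP.
rewrite eqn_mod_dvd ?leq_mul2l ?le ?orbT // -mulnBr Gauss_dvdr; last by rewrite coprime_sym.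
by rewrite -eqn_mod_dvd // !modn_small // => /eqP.
Qed.

Lemma FS_reindex g q (S : pred nat) u a b : q.-primitive_root g -> (0 < q)%N ->
  coprime u q -> ~~ S 0%N -> (forall l, S ((u * l) %% q)%N = S l) ->
  (b = u * a %[mod q])%N -> FS g q S (Posz b) = FS g q S (Posz a).
Proof.
move=> pg q0 cu S0 hS hb; rewrite !FS_ord //.
pose h (i : 'I_q) : 'I_q := Ordinal (ltn_pmod (u * i)%N q0).
have hinj : injective h.
  move=> i j /(congr1 val) /= e; apply: val_inj => /=.
  exact: (mul_inj q u i j cu (ltn_ord i) (ltn_ord j) e).
transitivity (\sum_(i < q | S i) cz g (Posz (a * h i)%N)).
  apply: eq_bigr => i _ /=.
  rewrite -(cz_mod g q _ pg) -[RHS](cz_mod g q _ pg); congr (cz g (Posz _)).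
  by rewrite modnMmr -modnMml hb modnMml mulnCA mulnA.
rewrite [RHS](reindex_inj hinj); apply: eq_bigl => i /=; by rewrite hS.
Qed.

Local Close Scope ring_scope.
Local Open Scope nat_scope.

Definition V (p q n : nat) : nat := logn p (gcdn n q).

Lemma V_eq p m a : prime p -> 0 < a -> V p (p ^ m) a = minn (logn p a) m.
Proof.
move=> pp a0; rewrite /V logn_gcd //; last by rewrite expn_gt0 prime_gt0.
by rewrite pfactorK.
Qed.

Lemma dvd_V p m a k : prime p -> 0 < a -> k <= m -> (p ^ k %| a) = (k <= V p (p ^ m) a).
Proof.
move=> pp a0 km; rewrite V_eq // leq_min km andbT pfactor_dvdn //.
Qed.

Lemma lift p m a b : prime p -> 0 < a -> 0 < b ->
  V p (p ^ m) a = V p (p ^ m) b -> V p (p ^ m) a < m ->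
  exists2 u, coprime u p & b = u * a %[mod p ^ m].
Proof.
move=> pp a0 b0 eV vm.
set v := V p (p ^ m) a in eV vm.
have lv : forall c, 0 < c -> V p (p ^ m) c < m -> logn p c = V p (p ^ m) c.
  move=> c c0; rewrite V_eq //.
  by rewrite /minn; case: (ltnP (logn p c) m) => //; rewrite ltnn.
have la := lv a a0 vm; rewrite -/v in la.
have lb : logn p b = v by rewrite eV lv // -eV.
set d := p ^ v.
have da : d %| a.
 rewrite /d -la. exact: (pfactor_dvdnn p a).
have db : d %| b by rewrite /d -lb; exact: pfactor_dvdnn.
set a1 := a %/ d; set b1 := b %/ d.
have cop : forall c, 0 < c -> logn p c = v -> coprime (c %/ d) p.
  move=> c c0 lc; rewrite coprime_sym prime_coprime //; apply/negP => H.
  have dc : d %| c by rewrite /d -lc; exact: pfactor_dvdnn.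
  have : p ^ v.+1 %| c.
    by rewrite -(divnK dc) expnSr [p ^ v * p]mulnC; exact: dvdn_mul H (dvdnn _).
  by rewrite pfactor_dvdn // lc ltnn.
have ca := cop a a0 la; have cb := cop b b0 lb.
set r := p ^ (m - v).
have qdr : p ^ m = d * r by rewrite /d /r -expnD subnKC // ltnW.
have car : coprime a1 r by rewrite /r coprime_pexpr // subn_gt0.
set t := totient r.
have t0 : 0 < t by rewrite /t totient_gt0 /r expn_gt0 prime_gt0.
exists (b1 * a1 ^ t.-1); first by rewrite coprimeMl cb coprimeXl.
rewrite -(divnK da) -{1}(divnK db) -/a1 -/b1 qdr.
have -> : b1 * a1 ^ t.-1 * (a1 * d) = d * (b1 * a1 ^ t).
  by rewrite mulnA -(mulnA b1) -expnSr prednK // mulnC.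
rewrite (mulnC b1 d) -!muln_modr; congr (d * _).
by rewrite -modnMmr (Euler_exp_totient car) modnMmr muln1.
Qed.

Lemma SB_inv p m j u l : prime p -> j < m -> coprime u p ->
  ((p ^ j %| (u * l) %% p ^ m) && ~~ (p ^ j.+1 %| (u * l) %% p ^ m)) =
  ((p ^ j %| l) && ~~ (p ^ j.+1 %| l)).
Proof.
move=> pp jm cu.
have H : forall k, k <= m -> (p ^ k %| (u * l) %% p ^ m) = (p ^ k %| l).
  move=> k km.
  have E : ((u * l) %% p ^ m) %% p ^ k = (u * l) %% p ^ k.
    by apply: modn_dvdm; rewrite dvdn_exp2l.
  rewrite {1}/dvdn E; change ((p ^ k %| u * l) = (p ^ k %| l)).
  by rewrite Gauss_dvdr // coprimeXl // coprime_sym.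
by rewrite !H // ltnW.
Qed.

Lemma SA_inv q u l : coprime u q -> coprime ((u * l) %% q) q = coprime l q.
Proof. by move=> cu; rewrite coprime_modl coprimeMl cu. Qed.

Lemma mxr m n : m <= n -> maxn m n = n. Proof. by move/maxn_idPr. Qed.
Lemma mxl m n : n <= m -> maxn m n = m. Proof. by move/maxn_idPl. Qed.
Lemma mnl m n : m <= n -> minn m n = m. Proof. by move/minn_idPl. Qed.
Lemma mnr m n : n <= m -> minn m n = n. Proof. by move/minn_idPr. Qed.

Lemma pair_sum (R : nmodType) (T : Type) (P : T -> Prop) (f : T -> R) (h : T -> nat) x1 x2 y1 y2 :
  (forall x y, P x -> P y -> h x = h y -> f x = f y) ->
  P x1 -> P x2 -> P y1 -> P y2 ->
  maxn (h x1) (h x2) = maxn (h y1) (h y2) -> minn (h x1) (h x2) = minn (h y1) (h y2) ->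
  (f x1 + f x2 = f y1 + f y2)%R.
Proof.
move=> hf p1 p2 p3 p4.
case: (leqP (h x1) (h x2)) => H1; case: (leqP (h y1) (h y2)) => H2.
- move=> e1 e2.
  by rewrite (hf x1 y1) // (hf x2 y2).
- move=> e1 e2.
  by rewrite (hf x1 y2) // (hf x2 y1) // GRing.addrC.
- move=> e1 e2.
  by rewrite (hf x1 y2) // (hf x2 y1) // GRing.addrC.
- move=> e1 e2.
  by rewrite (hf x1 y1) // (hf x2 y2).
Qed.

Local Close Scope nat_scope.
Local Open Scope ring_scope.

Definition Dz (p k : nat) (n : int) : bool := (((p ^ k)%N)%:Z %| n)%Z.
Definition Vz (p m : nat) (n : int) : nat := V p (p ^ m) `|n|.

Lemma Dz_abs p k n : Dz p k n = (p ^ k %| `|n|)%N.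
Proof. by rewrite /Dz dvdzE. Qed.

Lemma nd_pos p m n : ~~ Dz p m n -> (0 < `|n|)%N.
Proof. by rewrite Dz_abs lt0n; apply: contra => /eqP ->; rewrite dvdn0. Qed.

Lemma DV p m k n : prime p -> ~~ Dz p m n -> (k <= m)%N -> Dz p k n = (k <= Vz p m n)%N.
Proof. by move=> pp nd km; rewrite Dz_abs /Vz (dvd_V p m) // (nd_pos p m n nd). Qed.

Lemma Vlt p m n : prime p -> ~~ Dz p m n -> (Vz p m n < m)%N.
Proof. by move=> pp nd; move: (nd); rewrite (DV p m m n pp nd (leqnn m)) ltnNge. Qed.

Lemma VzN p m n : Vz p m (- n) = Vz p m n.
Proof. by rewrite /Vz abszN. Qed.

Lemma DzN p k n : Dz p k (- n) = Dz p k n.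
Proof. by rewrite !Dz_abs abszN. Qed.

Lemma vsum p m x y : prime p -> ~~ Dz p m x -> ~~ Dz p m y -> ~~ Dz p m (x + y) ->
  (Vz p m x < Vz p m y)%N -> Vz p m (x + y) = Vz p m x.
Proof.
move=> pp nx ny ns lt.
have ym := Vlt p m y pp ny.
apply/eqP; rewrite eqn_leq; apply/andP; split.
  rewrite leqNgt; apply/negP => H.
  have a1m : ((Vz p m x).+1 <= m)%N by apply: (leq_trans lt (ltnW ym)).
  have hs : Dz p (Vz p m x).+1 (x + y) by rewrite (DV p m _ _ pp ns a1m).
  have hy : Dz p (Vz p m x).+1 y by rewrite (DV p m _ _ pp ny a1m).
  have : Dz p (Vz p m x).+1 x.
    suff : Dz p (Vz p m x).+1 ((x + y) - y) by rewrite addrK.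
    by rewrite /Dz in hs hy *; apply: rpredB.
  by rewrite (DV p m _ _ pp nx a1m) ltnn.
have am : (Vz p m x <= m)%N by apply: ltnW; apply: Vlt.
rewrite -(DV p m _ _ pp ns am); apply: rpredD; rewrite -/(Dz _ _ _) (DV p m _ _ pp _ am) //.
exact: ltnW.
Qed.

Lemma veq p m x y : prime p -> odd p -> ~~ Dz p m x -> ~~ Dz p m y ->
  ~~ Dz p m (x + y) -> ~~ Dz p m (x - y) ->
  Vz p m x = Vz p m y -> minn (Vz p m (x + y)) (Vz p m (x - y)) = Vz p m x.
Proof.
move=> pp op nx ny ns nd e.
set a := Vz p m x.
have am : (a <= m)%N by apply: ltnW; apply: Vlt.
have hx : Dz p a x by rewrite (DV p m _ _ pp nx am).
have hy : Dz p a y by rewrite (DV p m _ _ pp ny am) -e.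
have ge1 : (a <= Vz p m (x + y))%N.
  by rewrite -(DV p m _ _ pp ns am); rewrite /Dz in hx hy *; apply: rpredD.
have ge2 : (a <= Vz p m (x - y))%N.
  by rewrite -(DV p m _ _ pp nd am); rewrite /Dz in hx hy *; apply: rpredB.
have H : ~~ ((a < Vz p m (x + y)) && (a < Vz p m (x - y)))%N.
  apply/negP => /andP [h1 h2].
  have a1m : (a.+1 <= m)%N by apply: Vlt.
  have d1 : Dz p a.+1 (x + y) by rewrite (DV p m _ _ pp ns a1m).
  have d2 : Dz p a.+1 (x - y) by rewrite (DV p m _ _ pp nd a1m).
  have d3 : Dz p a.+1 ((x + y) + (x - y)) by rewrite /Dz in d1 d2 *; apply: rpredD.
  have ez : absz ((x + y) + (x - y)) = (absz x * 2)%N.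
    by rewrite addrACA subrr addr0 -mulr2n -mulr_natr abszM.
  move: d3; rewrite Dz_abs ez Gauss_dvdl; last by rewrite coprimeXl // coprimen2.
  by rewrite -Dz_abs (DV p m _ _ pp nx a1m) ltnn.
apply/eqP; rewrite eqn_leq leq_min ge1 ge2 andbT geq_min.
by move: H; rewrite negb_and -!leqNgt andbT.
Qed.

Definition valid p m (q1 q2 : int) : bool :=
  [&& ~~ Dz p m q1, ~~ Dz p m q2, ~~ Dz p m (q1 + q2) & ~~ Dz p m (q1 - q2)].

Definition quad p m (q1 q2 : int) : nat * nat * nat * nat :=
  (maxn (Vz p m q1) (Vz p m q2), minn (Vz p m q1) (Vz p m q2),
   maxn (Vz p m (q1 + q2)) (Vz p m (q1 - q2)), minn (Vz p m (q1 + q2)) (Vz p m (q1 - q2))).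

Definition key p m (q1 q2 : int) : nat * nat :=
  if Vz p m q1 == Vz p m q2 then (Vz p m q1, maxn (Vz p m (q1 + q2)) (Vz p m (q1 - q2)))
  else (maxn (Vz p m q1) (Vz p m q2), minn (Vz p m q1) (Vz p m q2)).

Definition qf (k : nat * nat) : nat * nat * nat * nat :=
  if (k.2 < k.1)%N then (k.1, k.2, k.2, k.2) else (k.1, k.1, k.2, k.1).

Lemma quad_key p m q1 q2 : prime p -> odd p -> valid p m q1 q2 ->
  quad p m q1 q2 = qf (key p m q1 q2).
Proof.
move=> pp op /and4P [n1 n2 ns nd].
rewrite /quad /key; case: eqVneq => e.
  have mn := veq p m q1 q2 pp op n1 n2 ns nd e.
  have hle : (Vz p m q1 <= maxn (Vz p m (q1 + q2)) (Vz p m (q1 - q2)))%N.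
    by rewrite -mn leq_max geq_minl.
  by rewrite /qf /= ltnNge hle /= -e maxnn minnn mn.
have n2' : ~~ Dz p m (- q2) by rewrite DzN.
case: (ltngtP (Vz p m q1) (Vz p m q2)) => lt.
- have w1 := vsum p m q1 q2 pp n1 n2 ns lt.
  have w2 : Vz p m (q1 - q2) = Vz p m q1.
    by apply: (vsum p m q1 (- q2) pp n1 n2' nd); rewrite VzN.
  by rewrite w1 w2 maxnn minnn /qf /= lt.
- have w1 : Vz p m (q1 + q2) = Vz p m q2.
    by rewrite addrC; apply: (vsum p m q2 q1 pp n2 n1) => //; rewrite addrC.
  have w2 : Vz p m (q1 - q2) = Vz p m q2.
    rewrite addrC -(VzN p m q2); apply: (vsum p m (- q2) q1 pp n2' n1).
      by rewrite addrC.
    by rewrite VzN.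
  by rewrite w1 w2 maxnn minnn /qf /= lt.
- by rewrite lt eqxx in e.
Qed.

Lemma FS_absz g q (S : pred nat) n : FS g q S n = FS g q S (Posz `|n|).
Proof. by rewrite /FS; apply: eq_bigr => l _; rewrite !cz_abs. Qed.

Lemma FS_V g p m (S : pred nat) n n' : prime p -> (0 < m)%N ->
  (p ^ m).-primitive_root g -> ~~ S 0%N ->
  (forall u l, coprime u p -> S ((u * l) %% p ^ m)%N = S l) ->
  ~~ Dz p m n -> ~~ Dz p m n' -> Vz p m n = Vz p m n' ->
  FS g (p ^ m) S n = FS g (p ^ m) S n'.
Proof.
move=> pp m0 pg S0 hS nn nn' e.
rewrite FS_absz [RHS]FS_absz.
have [u cu hu] := lift p m `|n| `|n'| pp (nd_pos p m n nn) (nd_pos p m n' nn') e (Vlt p m n pp nn).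
symmetry; apply: (FS_reindex g (p ^ m) S u) => //.
- by rewrite expn_gt0 prime_gt0.
- by rewrite coprime_pexpr.
- by move=> l; apply: hS.
Qed.

Lemma sumS_eq g q (S : pred nat) q1 q2 q1' q2' : g != 0 ->
  FS g q S q1 + FS g q S q2 = FS g q S q1' + FS g q S q2' ->
  FS g q S (q1 + q2) + FS g q S (q1 - q2) = FS g q S (q1' + q2') + FS g q S (q1' - q2') ->
  \sum_(1 <= l < q | S l) factor_poly g q1 q2 l = \sum_(1 <= l < q | S l) factor_poly g q1' q2' l.
Proof. by move=> g0 e1 e2; rewrite !sum_factor // e1 e2. Qed.

Lemma FS_pair g p m (S : pred nat) q1 q2 q1' q2' : prime p -> odd p -> (0 < m)%N ->
  (p ^ m).-primitive_root g -> ~~ S 0%N ->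
  (forall u l, coprime u p -> S ((u * l) %% p ^ m)%N = S l) ->
  valid p m q1 q2 -> valid p m q1' q2' -> key p m q1 q2 = key p m q1' q2' ->
  \sum_(1 <= l < p ^ m | S l) factor_poly g q1 q2 l =
  \sum_(1 <= l < p ^ m | S l) factor_poly g q1' q2' l.
Proof.
move=> pp op m0 pg S0 hS v v' k.
have g0 : g != 0.
  apply/eqP => g0; move: (prim_expr_order pg); rewrite g0 expr0n.
  by rewrite expn_eq0 eqn0Ngt prime_gt0 //= => /eqP; rewrite eq_sym oner_eq0.
have hq : quad p m q1 q2 = quad p m q1' q2' by rewrite !quad_key // k.
move: hq; rewrite /quad => -[a1 a2 a3 a4].
have hf : forall x y, ~~ Dz p m x -> ~~ Dz p m y -> Vz p m x = Vz p m y ->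
   FS g (p ^ m) S x = FS g (p ^ m) S y.
  by move=> x y hx hy; apply: FS_V.
move: v v' => /and4P [n1 n2 ns nd] /and4P [n1' n2' ns' nd'].
apply: sumS_eq => //.
- by apply: (pair_sum _ _ (fun x => ~~ Dz p m x) (FS g (p ^ m) S) (Vz p m)).
- by apply: (pair_sum _ _ (fun x => ~~ Dz p m x) (FS g (p ^ m) S) (Vz p m)).
Qed.

Lemma tau_inv g p m q1 q2 q1' q2' : prime p -> odd p -> (2 <= m)%N ->
  (p ^ m).-primitive_root g ->
  valid p m q1 q2 -> valid p m q1' q2' -> key p m q1 q2 = key p m q1' q2' ->
  tau p m g q1 q2 = tau p m g q1' q2'.
Proof.
move=> pp op m2 pg v v' k.
have m0 : (0 < m)%N by apply: leq_trans m2.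
rewrite /tau /psi_poly; congr (_ :: _).
  apply: (FS_pair g p m (fun l => coprime l (p ^ m))) => //.
    rewrite /= /coprime gcd0n; apply/negP => /eqP e.
    have : (1 < p ^ m)%N by rewrite -{1}(expn0 p) ltn_exp2l // prime_gt1.
    by rewrite e ltnn.
  by move=> u l cu /=; apply: SA_inv; rewrite coprime_pexpr.
apply/eq_in_map => j; rewrite mem_iota => /andP [j1 j2].
rewrite /alpha_poly.
apply: (FS_pair g p m (fun l => (p ^ j %| l)%N && ~~ (p ^ j.+1 %| l)%N)) => //.
  by rewrite /= !dvdn0.
move=> u l cu /=; apply: SB_inv => //.
by move: j2; rewrite add1n prednK.
Qed.

Definition Tk p m g (k : nat * nat) : seq {poly algC} :=
  match excluded_middle_informative
          (exists qq : int * int, valid p m qq.1 qq.2 /\ key p m qq.1 qq.2 = k) with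
  | left H => let qq := proj1_sig (constructive_indefinite_description _ H) in
              tau p m g qq.1 qq.2
  | right _ => [::]
  end.

Lemma Tk_spec g p m q1 q2 : prime p -> odd p -> (2 <= m)%N ->
  (p ^ m).-primitive_root g -> valid p m q1 q2 ->
  Tk p m g (key p m q1 q2) = tau p m g q1 q2.
Proof.
move=> pp op m2 pg v; rewrite /Tk.
case: excluded_middle_informative => [H|H]; last first.
  by exfalso; apply: H; exists (q1, q2).
case: constructive_indefinite_description => [[a b] [va ka]] /=.
exact: tau_inv.
Qed.

Lemma key_lt p m q1 q2 : prime p -> valid p m q1 q2 ->
  ((key p m q1 q2).1 < m)%N /\ ((key p m q1 q2).2 < m)%N.
Proof.
move=> pp /and4P [n1 n2 ns nd].
have l1 := Vlt p m q1 pp n1; have l2 := Vlt p m q2 pp n2.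
have l3 := Vlt p m _ pp ns; have l4 := Vlt p m _ pp nd.
rewrite /key; case: ifP => _ /=; split => //.
- by rewrite gtn_max l3 l4.
- by rewrite gtn_max l1 l2.
- by rewrite gtn_min l1.
Qed.

Theorem proposition3p1p2 (p m : nat) (g : algC) :
  prime p -> odd p -> (2 <= m)%N -> is_exp_2pii_over (p ^ m) g ->
  exists s : seq (seq {poly algC}),
    (size s <= m ^ 2)%N /\
    forall q1 q2 : int,
      ~~ ((p ^ m)%N%:Z %| q1)%Z -> ~~ ((p ^ m)%N%:Z %| q2)%Z ->
      ~~ ((p ^ m)%N%:Z %| q1 + q2)%Z -> ~~ ((p ^ m)%N%:Z %| q1 - q2)%Z ->
      tau p m g q1 q2 \in s.
Proof.
move=> pp op m2 [pg _ _].
exists [seq Tk p m g k | k <- [seq (i, j) | i <- iota 0 m, j <- iota 0 m]].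
split; first by rewrite size_map size_allpairs size_iota.
move=> q1 q2 n1 n2 ns nd.
have v : valid p m q1 q2 by apply/and4P.
rewrite -(Tk_spec g p m q1 q2 pp op m2 pg v); apply: map_f.
have [k1 k2] := key_lt p m q1 q2 pp v.
case: (key p m q1 q2) k1 k2 => i j /= k1 k2.
by apply/allpairsP; exists (i, j); rewrite !mem_iota /= k1 k2.
Qed.
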